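(* Let $m\ge 2$. Let $X_1,\dots,X_m\in\mathbb{C}^n$ with $X_i=(x_{i,1},\dots,x_{i,n})$, and let $\alpha_1,\dots,\alpha_m\in\mathbb{Z}_{\ge0}^n$ with $\alpha_j=(\alpha_{j,1},\dots,\alpha_{j,n})$. Put $X_i^{\alpha_j}=x_{i,1}^{\alpha_{j,1}}x_{i,2}^{\alpha_{j,2}}\cdots x_{i,n}^{\alpha_{j,n}}$ and let $V_m=\det\big(X_i^{\alpha_j}\big)_{i,j=1}^m$ (row index $i$, column index $j$). Let $$M=\max_{i,j}|X_i^{\alpha_j}|,\qquad B=\max_{i,j,k}\Big\{|X_i^{\alpha_j}-X_i^{\alpha_k}|,\ |X_j^{\alpha_i}-X_k^{\alpha_i}|\Big\},$$ where all indices range over $1,\dots,m$. Then $|V_m|\le m!\,M^{m-1}B$.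
   Context: $V_m$ is called a generalized Vandermonde determinant. *)

(* Defs.v *)
From HB Require Import structures.
From mathcomp Require Import all_boot all_order all_algebra.
From mathcomp Require Import complex.
From mathcomp Require Import reals.
Set Implicit Arguments. Unset Strict Implicit. Unset Printing Implicit Defensive.
Import Order.TTheory GRing.Theory Num.Theory.
Local Open Scope ring_scope.

(* Complex numbers are R[i] = complex R over a real type R (e.g. the reals);
   |z| is the modulus `|z| (a nonnegative real element of R[i]);
   the maxima M, B are taken in R[i], where all compared values are real. *)

Definition mono (R : rcfType) (n : nat) (x : 'I_n -> R[i]) (a : 'I_n -> nat) : R[i] :=
  \prod_(k < n) x k ^+ a k.

Definition genVdet (R : rcfType) (m n : nat) (X : 'I_m -> 'I_n -> R[i])
  (alpha : 'I_m -> 'I_n -> nat) : R[i] :=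
  \det (\matrix_(i < m, j < m) mono (X i) (alpha j)).

(* M = max_{i,j} |X_i^{alpha_j}| (all quantities are >= 0, so 0 is a neutral start) *)
Definition Mbound (R : rcfType) (m n : nat) (X : 'I_m -> 'I_n -> R[i])
  (alpha : 'I_m -> 'I_n -> nat) : R[i] :=
  \big[Num.max/0]_(i < m) \big[Num.max/0]_(j < m) `|mono (X i) (alpha j)|.

Definition Bbound (R : rcfType) (m n : nat) (X : 'I_m -> 'I_n -> R[i])
  (alpha : 'I_m -> 'I_n -> nat) : R[i] :=
  \big[Num.max/0]_(i < m) \big[Num.max/0]_(j < m) \big[Num.max/0]_(k < m)
    Num.max (`|mono (X i) (alpha j) - mono (X i) (alpha k)|)
            `|mono (X j) (alpha i) - mono (X k) (alpha i)|.

(* Main.v *)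
Require Import Defs.
From HB Require Import structures.
From mathcomp Require Import all_boot all_order all_algebra.
From mathcomp Require Import complex.
From mathcomp Require Import reals.
From mathcomp Require Import perm.
Import Order.TTheory GRing.Theory Num.Theory.
Local Open Scope ring_scope.

Lemma max_ge (T : numDomainType) (x y : T) : 0 <= x -> 0 <= y ->
  [/\ 0 <= Num.max x y, x <= Num.max x y & y <= Num.max x y].
Proof.
move=> hx hy; rewrite /Num.max /Order.max.
case: ifP => h; first by rewrite hy lexx ltW.
split=> //; rewrite real_leNgt ?h // ger0_real //.
Qed.

Lemma bmax_ge (T : numDomainType) (I : eqType) (r : seq I) (F : I -> T) :
  (forall i, 0 <= F i) ->
  0 <= \big[Num.max/0]_(i <- r) F i /\ forall j, j \in r -> F j <= \big[Num.max/0]_(i <- r) F i.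
Proof.
move=> hF; elim: r => [|a r [h0 hj]]; first by rewrite big_nil lexx.
rewrite big_cons; have [m0 m1 m2] := @max_ge _ _ _ (hF a) h0; split=> // j.
rewrite in_cons => /orP[/eqP->//|/hj hjr]; exact: le_trans hjr m2.
Qed.

Lemma Mb_ge (R : realType) (m n : nat) (X : 'I_m -> 'I_n -> R[i]) (alpha : 'I_m -> 'I_n -> nat) :
  0 <= Mbound X alpha /\ forall i j, `|mono (X i) (alpha j)| <= Mbound X alpha.
Proof.
rewrite /Mbound.
have hin : forall i, 0 <= \big[Num.max/0]_(j < m) `|mono (X i) (alpha j)| /\
   forall j, `|mono (X i) (alpha j)| <= \big[Num.max/0]_(j < m) `|mono (X i) (alpha j)|.
  move=> i; have [h1 h2] := @bmax_ge _ _ (index_enum 'I_m) (fun j => `|mono (X i) (alpha j)|) (fun _ => normr_ge0 _).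
  by split=> // j; apply: h2; rewrite mem_index_enum.
have [h1 h2] := @bmax_ge _ _ (index_enum 'I_m) _ (fun i => (hin i).1).
split=> // i j; apply: le_trans ((hin i).2 j) _; apply: h2; exact: mem_index_enum.
Qed.

Lemma Bb_ge (R : realType) (m n : nat) (X : 'I_m -> 'I_n -> R[i]) (alpha : 'I_m -> 'I_n -> nat) :
  0 <= Bbound X alpha /\ forall i j k, `|mono (X i) (alpha j) - mono (X i) (alpha k)| <= Bbound X alpha.
Proof.
rewrite /Bbound.
set G := fun i j k => Num.max (`|mono (X i) (alpha j) - mono (X i) (alpha k)|)
            `|mono (X j) (alpha i) - mono (X k) (alpha i)|.
have hG : forall i j k, 0 <= G i j k /\ `|mono (X i) (alpha j) - mono (X i) (alpha k)| <= G i j k.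
  by move=> i j k; have [? ? _] := @max_ge _ _ _ (normr_ge0 (mono (X i) (alpha j) - mono (X i) (alpha k))) (normr_ge0 (mono (X j) (alpha i) - mono (X k) (alpha i))).
have h3 : forall i j, 0 <= \big[Num.max/0]_(k < m) G i j k /\ forall k, G i j k <= \big[Num.max/0]_(k < m) G i j k.
  move=> i j; have [h1 h2] := @bmax_ge _ _ (index_enum 'I_m) (G i j) (fun k => (hG i j k).1).
  by split=> // k; apply: h2; rewrite mem_index_enum.
have h4 : forall i, 0 <= \big[Num.max/0]_(j < m) \big[Num.max/0]_(k < m) G i j k /\ forall j, \big[Num.max/0]_(k < m) G i j k <= \big[Num.max/0]_(j < m) \big[Num.max/0]_(k < m) G i j k.
  move=> i; have [h1 h2] := @bmax_ge _ _ (index_enum 'I_m) _ (fun j => (h3 i j).1).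
  by split=> // k; apply: h2; rewrite mem_index_enum.
have [h1 h2] := @bmax_ge _ _ (index_enum 'I_m) _ (fun i => (h4 i).1).
split=> // i j k; apply: le_trans (hG i j k).2 _; apply: le_trans ((h3 i j).2 k) _.
apply: le_trans ((h4 i).2 j) _; apply: h2; exact: mem_index_enum.
Qed.

Theorem theorem2 (R : realType) (m n : nat) (hm : (2 <= m)%N)
  (X : 'I_m -> 'I_n -> R[i]) (alpha : 'I_m -> 'I_n -> nat) :
  `|genVdet X alpha|
    <= (m`!)%:R * (Mbound X alpha) ^+ (m.-1) * Bbound X alpha.
Proof.
have [M0 HM] := @Mb_ge _ _ _ X alpha; have [B0 HB] := @Bb_ge _ _ _ X alpha.
move: hm X alpha M0 HM B0 HB; case: m => [|[|m]] // _ X alpha M0 HM B0 HB.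
set M := Mbound X alpha; set B := Bbound X alpha.
pose i0 : 'I_m.+2 := ord0; pose i1 : 'I_m.+2 := @Ordinal m.+2 1 isT.
have i10 : i1 != i0 by [].
pose T := \matrix_(i < m.+2, j < m.+2) mono (X j) (alpha i).
pose T' := \matrix_(i < m.+2, j < m.+2) if i == i1 then T i j - T i0 j else T i j.
pose C := \matrix_(i < m.+2, j < m.+2) if i == i1 then T i0 j else T i j.
have -> : genVdet X alpha = \det T'.
  have dC : \det C = 0.
    apply: (determinant_alternate i10) => j; by rewrite !mxE eqxx; case: (i0 == i1).
  rewrite [RHS](@determinant_multilinear _ _ T' T C i1 1 (-1)).
  - rewrite dC mulr0 addr0 mul1r /genVdet -det_tr; congr (\det _).
    by apply/matrixP => i j; rewrite !mxE.
  - apply/rowP => j; by rewrite !mxE eqxx mul1r mulN1r.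
  - apply/(@matrixP _ m.+1 m.+2) => i j; by rewrite !mxE [lift _ _ == _]eq_sym (negbTE (neq_lift _ _)).
  - apply/(@matrixP _ m.+1 m.+2) => i j; by rewrite !mxE [lift _ _ == _]eq_sym (negbTE (neq_lift _ _)).
rewrite /determinant; apply: le_trans (ler_norm_sum _ _ _) _.
have hs : forall s : 'S_m.+2, `|(-1) ^+ s * \prod_i T' i (s i)| <= M ^+ m.+1 * B.
  move=> s; rewrite normrM normrX normrN1 expr1n mul1r normr_prod (bigD1 i1) //= mulrC.
  apply: ler_pM.
  - by apply: prodr_ge0 => i _.
  - by [].
  - apply: le_trans (@ler_prod _ _ _ _ _ (fun _ => M) _) _.
      move=> i hi; rewrite normr_ge0 /=; rewrite !mxE (negbTE hi); exact: HM.
    rewrite prodr_const cardC1 card_ord; exact: lexx.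
  - rewrite !mxE eqxx; exact: HB.
apply: le_trans (ler_sum _ (fun s _ => hs s)) _.
rewrite sumr_const card_Sn mulr_natl mulrnAl -/(m.+2.-1 = m.+1); exact: lexx.
Qed.
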